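(* The set $\mathrm{Ord}$ is not reduced to a point. More precisely: (i) for all $\alpha,\beta\in\mathrm{Ord}$, $\beta\le\alpha$ and $\alpha<\beta$ cannot both hold; (ii) for $m,n\in\mathbb N$, $m<n$ iff $\underline m<\underline n$, so the map $n\mapsto\underline n:\mathbb N\to\mathrm{Ord}$ is injective; (iii) for all $\alpha\in\mathrm{Ord}$ and $n>m$ in $\mathbb N$, it is impossible that $\mathrm{succ}^{(n)}(\alpha)=_{\mathrm{Ord}}\mathrm{succ}^{(m)}(\alpha)$.
   Context: Work constructively. Let $\mathfrak F$ be a set of index sets containing $\mathbb N$ and each $\mathbb N_k=\{n\in\mathbb N:n<k\}$ ($k\ge0$), closed (up to isomorphism) under finitely enumerated subsets, sets of finitely enumerated subsets, and disjoint unions indexed by elements of $\mathfrak F$. A finitely enumerated subset of $A$ is one given by a map $\mathbb N_k\to A$; write $F\subseteq_f I$. The set $\mathrm{ord}$ is inductively generated by $\underline 0$ and, for every family $(\alpha_i)_{i\in I}$ with $I\in\mathfrak F$, $\alpha_i\in\mathrm{ord}$, an element $\mathrm S(\alpha_i)_{i\in I}$; for such $\alpha$, $I_\alpha=I$ and $\alpha_i$ are its definitional subordinals; $I_{\underline 0}=\emptyset$. $\mathrm{succ}(\alpha)$ is $\mathrm S$ of the one-element family $(\alpha)$; $\mathrm{succ}^{(n)}$ is its $n$-fold iterate; $\underline{m+1}=\mathrm{succ}(\underline m)$. For a finite list $F$ in $I_\alpha$, $\alpha_F$ is the list of the $\alpha_i$, $i\in F$. Relations between an element and a nonempty finite list,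 by simultaneous induction: $\alpha\le\beta^1,\dots,\beta^m$ means $\alpha_i<\beta^1,\dots,\beta^m$ for all $i\in I_\alpha$; $\alpha<\beta^1,\dots,\beta^m$ means there exist $F_1\subseteq_f I_{\beta^1},\dots,F_m\subseteq_f I_{\beta^m}$, not all empty, with $\alpha\le\beta^1_{F_1},\dots,\beta^m_{F_m}$ (concatenated list); $\alpha\le\beta$, $\alpha<\beta$ are the case $m=1$. $\alpha=_{\mathrm{Ord}}\beta$ means $\alpha\le\beta$ and $\beta\le\alpha$; this is an equivalence relation compatible with $\le,<,\mathrm{succ}$, and $\mathrm{Ord}$ is the quotient with the induced relations and map. *)

(* Defs.v *)
From mathcomp Require Import ssreflect ssrfun ssrbool eqtype ssrnat seq fintype.
Set Implicit Arguments. Unset Strict Implicit. Unset Printing Implicit Defensive.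

Record iso (A B : Type) := Iso {
  iso_to : A -> B; iso_from : B -> A;
  iso_tf : forall a, iso_from (iso_to a) = a;
  iso_ft : forall b, iso_to (iso_from b) = b }.

(* The class \mathfrak F of index sets: codes [idx] decoded by [El],
   containing N and every N_k, closed (up to iso) under finitely enumerated
   subsets, the set of finitely enumerated subsets, and dependent sums. *)
Record Frak := {
  idx : Type;
  El : idx -> Type;
  cN : idx;
  isoN : iso (El cN) nat;
  cNk : nat -> idx;
  isoNk : forall k, iso (El (cNk k)) 'I_k;
  cSub : forall i k, ('I_k -> El i) -> idx;
  isoSub : forall i k (f : 'I_k -> El i),
      iso (El (cSub f)) {x : El i | exists j, f j = x};
  cFin : idx -> idx;
  isoFin : forall i, iso (El (cFin i)) {k : nat & 'I_k -> El i};
  cSigma : forall i, (El i -> idx) -> idx;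
  isoSigma : forall i (g : El i -> idx), iso (El (cSigma g)) {x : El i & El (g x)}
}.

Section Ord.
Variable F : Frak.

Inductive ord : Type :=
| zero : ord
| Sup (i : @idx F) (a : @El F i -> ord) : ord.

(* I_alpha and the definitional subordinals alpha_i *)
Definition Iidx (a : ord) : Type :=
  match a with zero => Empty_set | Sup i _ => @El F i end.
Definition sub (a : ord) : Iidx a -> ord :=
  match a return Iidx a -> ord with
  | zero => fun e => match e with end
  | Sup _ f => f
  end.

(* pick [b^1;...;b^m] g  <->  g = b^1_{F_1} ++ ... ++ b^m_{F_m} for some finite
   lists F_k of indices in I_{b^k} *)
Inductive pick : seq ord -> seq ord -> Prop :=
| pick_nil : pick [::] [::]
| pick_cons (b : ord) (bs gs : seq ord) (Fk : seq (Iidx b)) :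
    pick bs gs -> pick (b :: bs) (map (@sub b) Fk ++ gs).

(* alpha <= bs : every alpha_i < bs ;  alpha < bs : alpha <= b^1_{F_1},...,b^m_{F_m}
   with not all F_k empty (i.e. the concatenated list is nonempty). *)
Fixpoint ordle (a : ord) (bs : seq ord) {struct a} : Prop :=
  match a with
  | zero => True
  | Sup _ f => forall x, exists gs, [/\ pick bs gs, gs <> [::] & ordle (f x) gs]
  end.
Definition ordlt (a : ord) (bs : seq ord) : Prop :=
  exists gs, [/\ pick bs gs, gs <> [::] & ordle a gs].

Definition le1 (a b : ord) := ordle a [:: b].
Definition lt1 (a b : ord) := ordlt a [:: b].
Definition eqOrd (a b : ord) := le1 a b /\ le1 b a.

Definition succ (a : ord) : ord := @Sup (@cNk F 1) (fun _ => a).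
Definition succ_iter (n : nat) (a : ord) : ord := iter n succ a.
Definition num (n : nat) : ord := iter n succ zero.

End Ord.

(* Main.v *)
Require Import Defs.
From mathcomp Require Import ssreflect ssrfun ssrbool eqtype ssrnat seq fintype.
From Stdlib Require List.
Set Implicit Arguments. Unset Strict Implicit.

Definition chl {F : Frak} (C D : seq (ord F)) :=
  forall d, List.In d D -> exists c (x : Iidx c), List.In c C /\ d = sub x.

Lemma pick_sound {F : Frak} (B G : seq (ord F)) : Defs.pick B G -> chl B G.
Proof.
elim=> [|b bs gs Fk Hp IH] d Hd /=; first by case: Hd.
case: (List.in_app_or _ _ _ Hd) => H.
- case/List.in_map_iff: H => x [<- _]. exists b, x. by split; [left|].
- case: (IH d H) => c [x [Hc ->]]. exists c, x. by split; [right|].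
Qed.

Lemma pick_nil_ex {F : Frak} (B : seq (ord F)) : Defs.pick B [::].
Proof. elim: B => [|b B IH]; first exact: Defs.pick_nil. exact (@Defs.pick_cons F b B [::] [::] IH). Qed.

Lemma pick_add {F : Frak} (B G : seq (ord F)) : Defs.pick B G ->
  forall c (x : Iidx c), List.In c B -> exists G', Defs.pick B G' /\ List.incl (sub x :: G) G'.
Proof.
elim=> [|b bs gs Fk Hp IH] c x Hc; first by case: Hc.
case: Hc => [Hbc|Hc].
- subst c. exists (map (@sub F b) (x :: Fk) ++ gs). split; first exact: Defs.pick_cons.
  move=> y /= [<-|Hy]; first by left. by right.
- case: (IH c x Hc) => G' [HG' Hi]. exists (map (@sub F b) Fk ++ G').
  split; first exact: Defs.pick_cons.
  move=> y /= [<-|Hy]; apply: List.in_or_app; first by right; apply: Hi; left.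
  case: (List.in_app_or _ _ _ Hy) => H; first by left.
  by right; apply: Hi; right.
Qed.

Lemma pick_complete {F : Frak} (B G : seq (ord F)) : chl B G ->
  exists G', Defs.pick B G' /\ List.incl G G'.
Proof.
elim: G => [|g G IH] H.
  exists [::]; split; [exact: pick_nil_ex | exact: List.incl_nil_l].
have [G' [HG' Hi]] : exists G', Defs.pick B G' /\ List.incl G G'.
  by apply: IH => d Hd; apply: H; right.
case: (H g (or_introl erefl)) => c [x [Hc ->]].
case: (pick_add HG' x Hc) => G'' [HG'' Hi'].
exists G''; split => // y [<-|Hy]; first by apply: Hi'; left.
by apply: Hi'; right; apply: Hi.
Qed.

Lemma incl_ne {T} (A B : seq T) : List.incl A B -> A <> [::] -> B <> [::].
Proof. case: A => [|a A] H // _ E. by move: (H a (or_introl erefl)); rewrite E. Qed.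

Lemma ordle_mono {F : Frak} (a : ord F) : forall B B', ordle a B -> List.incl B B' -> ordle a B'.
Proof.
elim: a => [//|i f IH] B B' H Hi x.
case: (H x) => gs [Hp Hne Hle].
have Hc : chl B' gs.
  move=> d Hd. case: (pick_sound Hp Hd) => c [y [Hc ->]]. exists c, y. by split; [apply: Hi|].
case: (pick_complete Hc) => gs' [Hp' Hi'].
exists gs'; split => //; [exact: (incl_ne Hi') | exact: (IH x gs gs')].
Qed.

Lemma child_lt {F : Frak} (c : ord F) K : ordle c K -> forall x : Iidx c,
  exists L, [/\ chl K L, L <> [::] & ordle (sub x) L].
Proof.
case: c => [|i f] H x; first by case: x.
case: (H x) => gs [Hp Hne Hle]. exists gs; split => //; exact: pick_sound.
Qed.

Lemma build {F : Frak} i (f : El i -> ord F) K :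
  (forall x, exists L, [/\ chl K L, L <> [::] & ordle (f x) L]) -> ordle (Sup f) K.
Proof.
move=> H x. case: (H x) => L [Hc Hne Hle].
case: (pick_complete Hc) => G [HG Hi].
exists G; split => //; [exact: (incl_ne Hi) | exact: (ordle_mono Hle Hi)].
Qed.

Lemma lt_intro {F : Frak} (a : ord F) K L : chl K L -> L <> [::] -> ordle a L -> ordlt a K.
Proof.
move=> Hc Hne Hle. case: (pick_complete Hc) => G [HG Hi].
exists G; split => //; [exact: (incl_ne Hi) | exact: (ordle_mono Hle Hi)].
Qed.

Lemma lt_elim {F : Frak} (a : ord F) K : ordlt a K ->
  exists L, [/\ chl K L, L <> [::] & ordle a L].
Proof. case=> G [HG Hne Hle]. exists G; split => //; exact: pick_sound. Qed.

Lemma collect {F : Frak} (C L : seq (ord F)) :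
  (forall l, List.In l L -> exists M, [/\ chl C M, M <> [::] & ordle l M]) ->
  exists N, [/\ chl C N, L <> [::] -> N <> [::] & forall l, List.In l L -> ordle l N].
Proof.
elim: L => [|l L IH] H.
  exists [::]; split => //; by move=> d [].
case: (H l (or_introl erefl)) => M [HM HMne HlM].
case: IH => [l' Hl'|N [HN _ HLN]]; first by apply: H; right.
exists (M ++ N); split.
- move=> d Hd. case: (List.in_app_or _ _ _ Hd); [exact: HM | exact: HN].
- move=> _; case: M HMne {HM HlM} => //.
- move=> l' [<-|Hl']; first by apply: (ordle_mono HlM); exact: List.incl_appl.
  by apply: (ordle_mono (HLN _ Hl')); exact: List.incl_appr.
Qed.

Lemma ordle_trans {F : Frak} (a : ord F) : forall B C,
  ordle a B -> (forall b, List.In b B -> ordle b C) -> ordle a C.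
Proof.
elim: a => [//|i f IH] B C H HB. apply: build => x.
case: (child_lt H x) => L [HL HLne HfL].
case: (@collect F C L) => [l Hl|N [HN HNne HLN]].
  case: (HL l Hl) => c [y [Hc ->]]. exact: (child_lt (HB c Hc)).
exists N; split; [done | exact: HNne | exact: (IH x L N HfL HLN)].
Qed.

Lemma child_le {F : Frak} (c : ord F) : forall b, (exists x : Iidx b, sub x = c) -> ordle c [:: b].
Proof.
elim: c => [//|i g IH] b [x Hx]. apply: build => y.
exists [:: Sup g]; split => //.
- move=> d [<-|[]]. exists b, x. by split; [left|].
- apply: IH. by exists y.
Qed.

Lemma ordle_refl {F : Frak} (a : ord F) : ordle a [:: a].
Proof. apply: child_le. Abort.

Lemma le_succ {F : Frak} (a : ord F) : ordle a [:: succ a].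
Proof. apply: child_le. by exists (iso_from (isoNk F 1) ord0). Qed.

Lemma ordle_refl {F : Frak} (a : ord F) : ordle a [:: a].
Proof.
elim: a => [//|i f IH]. apply: build => x. exists [:: f x]; split => //.
move=> d [<-|[]]. exists (Sup f), x. by split; [left|].
Qed.

Definition Rl {F : Frak} (D C : seq (ord F)) := D <> [::] /\ chl C D.

Lemma acc_incl {F : Frak} (X Y : seq (ord F)) : Acc Rl X -> List.incl Y X -> Acc Rl Y.
Proof.
move=> HX Hi. constructor => Z [Hne Hc]. apply: (Acc_inv HX). split => // d Hd.
case: (Hc d Hd) => c [x [Hcy ->]]. exists c, x. by split; [apply: Hi|].
Qed.

Lemma split_chl {F : Frak} (A B E : seq (ord F)) : chl (A ++ B) E ->
  exists E1 E2, [/\ chl A E1, chl B E2 & List.incl E (E1 ++ E2)].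
Proof.
elim: E => [|e E IH] H.
  exists [::], [::]; split; [by move=> d []|by move=> d []|exact: List.incl_nil_l].
case: IH => [d Hd|E1 [E2 [H1 H2 Hi]]]; first by apply: H; right.
case: (H e (or_introl erefl)) => c [x [Hc He]].
case: (List.in_app_or _ _ _ Hc) => Hc'.
- exists (e :: E1), E2; split => //.
  + move=> d [<-|Hd]; last exact: H1. exists c, x. by split.
  + move=> d [<-|Hd]; first by left. by right; apply: Hi.
- exists E1, (e :: E2); split => //.
  + move=> d [<-|Hd]; last exact: H2. exists c, x. by split.
  + move=> d [<-|Hd]; first by apply: List.in_or_app; right; left.
    case: (List.in_app_or _ _ _ (Hi d Hd)) => H'; apply: List.in_or_app; first by left.
    by right; right.
Qed.

Lemma acc_nil {F : Frak} : Acc (@Rl F) [::].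
Proof.
constructor => D [Hne Hc]. case: D Hne Hc => [//|d D] _ Hc.
by case: (Hc d (or_introl erefl)) => c [x [[] _]].
Qed.

Lemma acc_sub {F : Frak} (B E : seq (ord F)) : Acc Rl B -> chl B E -> Acc Rl E.
Proof.
move=> HB Hc. case: E Hc => [|e E] Hc; first exact: acc_nil.
by apply: (Acc_inv HB).
Qed.

Lemma acc_app {F : Frak} (A : seq (ord F)) : Acc Rl A -> forall B, Acc Rl B -> Acc Rl (A ++ B).
Proof.
elim=> {}A _ IHA B HB. constructor => E [Hne Hc].
case: (split_chl Hc) => E1 [E2 [H1 H2 Hi]].
apply: (acc_incl _ Hi).
case: E1 H1 {Hi} => [|e E1] H1; first exact: (acc_sub HB H2).
apply: IHA; first by split.
exact: (acc_sub HB H2).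
Qed.

Lemma acc_all {F : Frak} (D : seq (ord F)) :
  (forall d, List.In d D -> Acc Rl [:: d]) -> Acc Rl D.
Proof.
elim: D => [|d D IH] H; first exact: acc_nil.
apply: (@acc_app F [:: d]); first by apply: H; left.
by apply: IH => e He; apply: H; right.
Qed.

Lemma acc_single {F : Frak} (c : ord F) : Acc Rl [:: c].
Proof.
elim: c => [|i f IH].
  constructor => D [Hne Hc]. case: D Hne Hc => [//|d D] _ Hc.
  case: (Hc d (or_introl erefl)) => c [x [[Hc'|[]] _]]. by subst c; case: x.
constructor => D [Hne Hc]. apply: acc_all => d Hd.
case: (Hc d Hd) => c [x [[Hc'|[]] ->]]. subst c. exact: IH.
Qed.

Lemma no_inv {F : Frak} (C : seq (ord F)) :
  ~ exists D, Rl D C /\ forall c, List.In c C -> ordle c D.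
Proof.
have HA : Acc Rl C by apply: acc_all => d _; exact: acc_single.
elim: HA => {}C _ IH [D [[Hne Hc] Hle]].
apply: (IH D (conj Hne Hc)).
case: (@collect F D D) => [d Hd|N [HN HNne HDN]].
  case: (Hc d Hd) => c [x [Hc' ->]]. exact: (child_lt (Hle c Hc')).
exists N; split => //. split => //. exact: HNne.
Qed.

Lemma part1 {F : Frak} (a b : ord F) : ~ (le1 b a /\ lt1 a b).
Proof.
case=> Hba Hab. case: (lt_elim Hab) => L [HL HLne HaL].
case: (@collect F [:: a] L) => [l Hl|N [HN HNne HLN]].
  case: (HL l Hl) => c [x [[Hc|[]] ->]]. subst c. exact: (child_lt Hba).
apply: (@no_inv F [:: a]). exists N; split; first by split => //; exact: HNne.
move=> c [<-|[]]. exact: (ordle_trans HaL HLN).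
Qed.

Lemma le_iter {F : Frak} (a : ord F) m n : m <= n -> ordle (succ_iter m a) [:: succ_iter n a].
Proof.
elim: n => [|n IH] Hmn.
  by move: Hmn; rewrite leqn0 => /eqP ->; exact: ordle_refl.
case: (ltngtP m n.+1) Hmn => // [Hlt|->] _; last exact: ordle_refl.
apply: (ordle_trans (IH Hlt)) => b [<-|[]]. exact: le_succ.
Qed.

Lemma lt_iter {F : Frak} (a : ord F) m n : m < n -> lt1 (succ_iter m a) (succ_iter n a).
Proof.
case: n => [//|n] Hmn.
apply: (@lt_intro F _ _ [:: succ_iter n a]) => //; last exact: le_iter.
move=> d [<-|[]]. exists (succ_iter n.+1 a), (iso_from (isoNk F 1) ord0).
by split; [left|].
Qed.

Unset Implicit Arguments.

Theorem theorem4p9 (F : Frak) :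
  (exists a b : ord F, ~ eqOrd a b) /\
  (forall a b : ord F, ~ (le1 b a /\ lt1 a b)) /\
  (forall m n : nat, (m < n) <-> lt1 (num F m) (num F n)) /\
  (forall m n : nat, eqOrd (num F m) (num F n) -> m = n) /\
  (forall (a : ord F) (m n : nat), m < n -> ~ eqOrd (succ_iter n a) (succ_iter m a)).
Proof.
have P4 : forall m n : nat, eqOrd (num F m) (num F n) -> m = n.
  move=> m n [H1 H2]. case: (ltngtP m n) => // H.
  - by case: (part1 (conj H2 (lt_iter (zero F) H))).
  - by case: (part1 (conj H1 (lt_iter (zero F) H))).
split; first by exists (num F 0), (num F 1) => /P4.
split; first exact: @part1.
split.
  move=> m n; split; first exact: lt_iter.
  move=> H. case: (leqP n m) => // Hnm.
  by case: (part1 (conj (le_iter (zero F) Hnm) H)).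
split; first exact: P4.
move=> a m n Hmn [H1 _]. exact: (part1 (conj H1 (lt_iter a Hmn))).
Qed.
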